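(* Let $d,n\ge1$ and $\boldsymbol{x}_1,\dots,\boldsymbol{x}_n\in\mathbb{R}^d$, with $\boldsymbol{S}=\sum_{j=1}^n\boldsymbol{x}_j\boldsymbol{x}_j^\top$. There exist matrices $\boldsymbol{Q}_m,\boldsymbol{K}_m,\boldsymbol{V}_m\in\mathbb{R}^{2d\times2d}$, $m=1,2$, depending only on $d$ and $n$, and the matrix $\boldsymbol{W}=\begin{bmatrix}\boldsymbol{I}_d&\boldsymbol{O}_d\\ \boldsymbol{O}_d&\boldsymbol{O}_d\end{bmatrix}$, such that the following holds for every symmetric matrix $\boldsymbol{T}\in\mathbb{R}^{d\times d}$: if the 2-head full attention layer with normalized ReLU activation and parameters $\{\boldsymbol{Q}_m,\boldsymbol{K}_m,\boldsymbol{V}_m\}_{m=1}^2$ is applied to $\boldsymbol{H}=[\boldsymbol{h}_1,\dots,\boldsymbol{h}_n]$ with $\boldsymbol{h}_t=\begin{bmatrix}\boldsymbol{T}\boldsymbol{x}_t\\ \boldsymbol{x}_t\end{bmatrix}$, producing $\tilde{\boldsymbol{h}}_t$, then $$\tilde{\boldsymbol{h}}_t=\begin{bmatrix}\big(\boldsymbol{T}-\tfrac12\boldsymbol{T}\boldsymbol{S}\boldsymbol{T}\big)\boldsymbol{x}_t\\ \boldsymbol{x}_t\end{bmatrix}\quad\text{and}\quad \tilde{\boldsymbol{h}}_t+\boldsymbol{W}\tilde{\boldsymbol{h}}_t=\begin{bmatrix}\boldsymbol{T}'\boldsymbol{x}_t\\ \boldsymbol{x}_t\end{bmatrix}\ \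 (t\in[n]),$$ where $\boldsymbol{T}'=2\boldsymbol{T}-\boldsymbol{T}\boldsymbol{S}\boldsymbol{T}$, and $\boldsymbol{T}'$ is again symmetric. In particular, iterating this layer $k$ times starting from $\boldsymbol{T}^{(0)}=\alpha\boldsymbol{S}$ produces columns $\begin{bmatrix}\boldsymbol{M}_k\boldsymbol{x}_t\\ \boldsymbol{x}_t\end{bmatrix}$, where $\boldsymbol{M}_0=\alpha\boldsymbol{S}$ and $\boldsymbol{M}_{j}=2\boldsymbol{M}_{j-1}-\boldsymbol{M}_{j-1}\boldsymbol{S}\boldsymbol{M}_{j-1}$ for $j\ge1$.
   Context: A full attention layer with $M$ heads and normalized ReLU activation, with parameters $\{\boldsymbol{Q}_m,\boldsymbol{K}_m,\boldsymbol{V}_m\}_{m=1}^M$ (matrices of size $D\times D$), maps an input $\boldsymbol{H}=[\boldsymbol{h}_1,\dots,\boldsymbol{h}_n]\in\mathbb{R}^{D\times n}$ to $\tilde{\boldsymbol{H}}=[\tilde{\boldsymbol{h}}_1,\dots,\tilde{\boldsymbol{h}}_n]$ where $$\tilde{\boldsymbol{h}}_t=\boldsymbol{h}_t+\frac{1}{n}\sum_{m=1}^M\sum_{j=1}^n \mathrm{ReLU}\big(\langle \boldsymbol{Q}_m\boldsymbol{h}_t,\boldsymbol{K}_m\boldsymbol{h}_j\rangle\big)\,\boldsymbol{V}_m\boldsymbol{h}_j,\qquad t\in[n].$$ $\boldsymbol{I}_d$ and $\boldsymbol{O}_d$ denote the $d\times d$ identity and zero matrices. *)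

(* Defs.v *)
From HB Require Import structures.
From mathcomp Require Import all_boot all_order all_algebra.
From mathcomp Require Import reals.
Set Implicit Arguments. Unset Strict Implicit. Unset Printing Implicit Defensive.
Import Order.TTheory GRing.Theory Num.Theory.
Local Open Scope ring_scope.

Section Attn.
Variable R : realType.

Definition relu (a : R) : R := Num.max a 0.

Definition dotv (D : nat) (u v : 'cV[R]_D) : R := \sum_(i < D) u i 0 * v i 0.

Definition attn_layer (D n M : nat) (Q K V : 'I_M -> 'M[R]_D)
    (H : 'M[R]_(D, n)) : 'M[R]_(D, n) :=
  \matrix_(i < D, t < n)
    (H i t + (n%:R)^-1 *
       \sum_(m < M) \sum_(j < n)
          relu (dotv (Q m *m col t H) (K m *m col j H)) * (V m *m col j H) i 0).

Definition Smat (d n : nat) (x : 'I_n -> 'cV[R]_d) : 'M[R]_d :=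
  \sum_(j < n) x j *m (x j)^T.

Definition Hin (d n : nat) (x : 'I_n -> 'cV[R]_d) (T : 'M[R]_d) : 'M[R]_(d + d, n) :=
  \matrix_(i < d + d, t < n) (col_mx (T *m x t) (x t)) i 0.

Definition Wmat (d : nat) : 'M[R]_(d + d) :=
  block_mx (1%:M : 'M[R]_d) 0 0 0.

Definition step (d n : nat) (Q K V : 'I_2 -> 'M[R]_(d + d)) (H : 'M[R]_(d + d, n)) :=
  let Ht := attn_layer Q K V H in Ht + Wmat d *m Ht.

Fixpoint Mseq (d : nat) (S : 'M[R]_d) (alpha : R) (k : nat) : 'M[R]_d :=
  match k with
  | 0 => alpha *: S
  | k'.+1 => let P := Mseq S alpha k' in 2%:R *: P - P *m S *m P
  end.

End Attn.

(* Main.v *)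
Require Import Defs.
From HB Require Import structures.
From mathcomp Require Import all_boot all_order all_algebra.
From mathcomp Require Import reals.
From mathcomp Require Import ring.
Import Order.TTheory GRing.Theory Num.Theory.
Local Open Scope ring_scope.

Section Helpers.
Variable R : realType.

Lemma dotvE D (u v : 'cV[R]_D) : dotv u v = (u^T *m v) 0 0.
Proof. rewrite /dotv !mxE; apply: eq_bigr => i _; rewrite !mxE. by []. Qed.

Lemma colHin d n (x : 'I_n -> 'cV[R]_d) T t :
  col t (Hin x T) = col_mx (T *m x t) (x t).
Proof. by apply/matrixP => i k; rewrite !mxE (ord1 k). Qed.

Lemma relu_sub (a : R) : relu a - relu (- a) = a.
Proof.
rewrite /relu; case: (ltrgt0P a) => ha.
- by rewrite max_r ?subr0 // oppr_le0 ltW.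
- by rewrite max_l ?sub0r ?opprK // oppr_ge0 ltW.
- by rewrite ha oppr0 maxxx subrr.
Qed.

Lemma colP' m n (A B : 'M[R]_(m, n)) : (forall t, col t A = col t B) -> A = B.
Proof.
move=> h; apply/matrixP => i j.
by have := congr1 (fun M : 'cV[R]_m => M i ord0) (h j); rewrite !mxE.
Qed.

End Helpers.

Theorem mainTheorem3 (R : realType) (d n : nat) (hd : (0 < d)%N) (hn : (0 < n)%N) :
  exists Q K V : 'I_2 -> 'M[R]_(d + d),
  forall x : 'I_n -> 'cV[R]_d,
    (forall T : 'M[R]_d, T^T = T ->
       let S := Smat x in
       let T' := 2%:R *: T - T *m S *m T in
       let Ht := attn_layer Q K V (Hin x T) in
       (forall t : 'I_n,
          col t Ht = col_mx ((T - 2%:R^-1 *: (T *m S *m T)) *m x t) (x t)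
          /\ col t (Ht + @Wmat R d *m Ht) = col_mx (T' *m x t) (x t))
       /\ T'^T = T')
    /\
    (forall (alpha : R) (k : nat) (t : 'I_n),
       col t (iter k (step Q K V) (Hin x (alpha *: Smat x)))
       = col_mx (Mseq (Smat x) alpha k *m x t) (x t)).
Proof.
pose P : 'M[R]_(d + d) := block_mx 1%:M 0 0 0.
pose Kd : 'M[R]_(d + d) := block_mx 0 1%:M 0 0.
pose sg (m : 'I_2) : R := if val m == 0%N then 1 else -1.
pose c : R := - (n%:R / 2%:R).
exists (fun m => sg m *: P), (fun _ => Kd), (fun m => (sg m * c) *: P).
move=> x.
have Pcol : forall (a b : 'cV[R]_d), P *m col_mx a b = col_mx a 0.
  by move=> a b; rewrite mul_block_col !mul1mx !mul0mx ?addr0 ?add0r.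
have Kcol : forall (a b : 'cV[R]_d), Kd *m col_mx a b = col_mx b 0.
  by move=> a b; rewrite mul_block_col !mul1mx !mul0mx ?addr0 ?add0r.
set S := Smat x.
have key : forall T : 'M[R]_d, forall t,
   col t (attn_layer (fun m => sg m *: P) (fun _ => Kd) (fun m => (sg m * c) *: P) (Hin x T))
   = col_mx ((T - 2%:R^-1 *: (T *m S *m T)) *m x t) (x t).
  move=> T t.
  pose a (j : 'I_n) : R := ((T *m x t)^T *m x j) 0 0.
  have step1 : col t (attn_layer (fun m => sg m *: P) (fun _ => Kd)
                 (fun m => (sg m * c) *: P) (Hin x T))
     = col_mx (T *m x t) (x t) + n%:R^-1 *: \sum_j (a j * c) *: col_mx (T *m x j) 0.
    apply/matrixP => i k; rewrite !mxE summxE (ord1 k).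
    congr (_ + _ * _).
    rewrite big_ord_recl big_ord1 -big_split /=.
    apply: eq_bigr => j _.
    rewrite !colHin -!scalemxAl !Pcol Kcol !dotvE.
    rewrite !linearZ /= -!scalemxAl !tr_col_mx !trmx0 !mul_row_col !mul0mx !addr0.
    rewrite !mxE /sg /=.
    set e := col_mx (T *m x j) 0 i 0.
    set al := ((T *m x t)^T *m x j) 0 0.
    rewrite mul1r mulN1r.
    have := @relu_sub R al; rewrite /a -/al => <-.
    rewrite /al ?mxE /= !mulrA mulr1 mulrN1 !mulNr !mulrBl ?mulNr; reflexivity.
  rewrite step1.
  have E : forall u : 'cV[R]_d, col_mx u 0 = col_mx (1%:M : 'M[R]_d) (0 : 'M[R]_d) *m u.
    by move=> u; rewrite mul_col_mx mul1mx mul0mx.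
  under eq_bigr => j _ do rewrite E scalemxAr.
  rewrite -mulmx_sumr scalemxAr mul_col_mx mul1mx mul0mx add_col_mx addr0.
  congr col_mx.
  have Hs : \sum_j (a j * c) *: (T *m x j) = c *: (T *m S *m T *m x t).
    rewrite -mulmxA -mulmxA /S /Smat mulmx_suml mulmx_sumr scaler_sumr.
    apply: eq_bigr => j _.
    rewrite -!mulmxA [(x j)^T *m _]mx11_scalar mul_mx_scalar -scalemxAr scalerA.
    congr (_ *: _); rewrite mulrC; congr (_ * _).
    by rewrite /a -[(T *m x t)^T *m x j]trmxK trmx_mul trmxK [in LHS]mxE.
  rewrite Hs scalerA mulmxBl -scalemxAl.
  rewrite -scaleNr; congr (_ + _ *: _).
  rewrite /c mulrN; congr (- _).
  have n0 : (n%:R : R) != 0 by rewrite pnatr_eq0 -lt0n.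
  by rewrite mulrA mulVf // mul1r.
have keyW : forall T : 'M[R]_d, forall t,
   let Ht := attn_layer (fun m => sg m *: P) (fun _ => Kd) (fun m => (sg m * c) *: P) (Hin x T) in
   col t (Ht + @Wmat R d *m Ht) = col_mx ((2%:R *: T - T *m S *m T) *m x t) (x t).
  move=> T t Ht.
  rewrite !colE mulmxDl -mulmxA -!colE key /Wmat mul_block_col !mul1mx !mul0mx ?addr0 ?add0r.
  rewrite add_col_mx addr0; congr col_mx.
  rewrite -mulmxDl; congr (_ *m _).
  by rewrite -mulr2n -scaler_nat scalerBr scalerA mulfV ?pnatr_eq0 // scale1r.
have Ssym : S^T = S.
  rewrite /S /Smat linear_sum /=; apply: eq_bigr => j _; by rewrite trmx_mul trmxK.
have symT' : forall T : 'M[R]_d, T^T = T -> (2%:R *: T - T *m S *m T)^T = 2%:R *: T - T *m S *m T.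
  move=> T hT; rewrite linearB /= linearZ /= !trmx_mul hT Ssym mulmxA. by [].
split.
  move=> T hT S' T' Ht; split; last exact: symT'.
  by move=> t; split; [apply: key | apply: keyW].
move=> alpha k t.
have Msym : forall k, (Mseq S alpha k)^T = Mseq S alpha k.
  elim=> [|k' IH] /=; first by rewrite linearZ /= Ssym.
  exact: symT'.
suff -> : iter k (step (fun m => sg m *: P) (fun _ => Kd) (fun m => (sg m * c) *: P))
            (Hin x (alpha *: Smat x)) = Hin x (Mseq S alpha k) by rewrite colHin.
elim: k => [|k IH] //=.
rewrite IH; apply: colP' => t'.
by rewrite /step keyW colHin.
Qed.
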